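(* Let $T$ and $S$ be maps (each with finitely many points of period dividing $n$ for every $n\ge1$), and let $T\times S$ be their Cartesian product. If any two of the sequences $\mathcal O_T$, $\mathcal O_S$, $\mathcal O_{T\times S}$ are multiplicative, then so is the third.
   Context: For a map $T:X\to X$, $\mathcal O_T(n)$ denotes the number of closed orbits of length $n$ under $T$ (sets $\{x,Tx,\dots,T^{n-1}x\}$ with $T^nx=x$ of cardinality exactly $n$), and $\mathcal F_T(n)=|\{x:T^nx=x\}|$. A sequence $f:\mathbb N\to\mathbb Z$ is multiplicative if $f(1)=1$ and $f(mn)=f(m)f(n)$ whenever $\gcd(m,n)=1$. $T\times S$ denotes the map $(x,y)\mapsto(Tx,Sy)$. *)

(* Defs.v *)
From mathcomp Require Import all_boot all_order all_algebra.
From mathcomp Require Import finmap boolp classical_sets cardinality.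
Set Implicit Arguments. Unset Strict Implicit. Unset Printing Implicit Defensive.
Import GRing.Theory.
Local Open Scope classical_set_scope.
Local Open Scope fset_scope.

Definition per_pts (X : Type) (T : X -> X) (n : nat) : set X :=
  [set x | iter n T x = x].

Definition fin_periodic (X : Type) (T : X -> X) : Prop :=
  forall n : nat, (0 < n)%N -> finite_set (per_pts T n).

Definition FixCount (X : choiceType) (T : X -> X) (n : nat) : nat :=
  #|` fset_set (per_pts T n)|.

Definition closed_orbit (X : choiceType) (T : X -> X) (n : nat) (A : set X) : Prop :=
  exists x : X, iter n T x = x /\
    A = [set iter k T x | k in [set k : nat | (k < n)%N]] /\
    finite_set A /\ #|` fset_set A| = n.

Definition OrbCount (X : choiceType) (T : X -> X) (n : nat) : nat :=
  #|` fset_set (closed_orbit T n)|.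

Definition multiplicative (f : nat -> int) : Prop :=
  f 1%N = 1%R /\
  forall m n : nat, (0 < m)%N -> (0 < n)%N -> coprime m n ->
    f (m * n)%N = (f m * f n)%R.

Definition prod_map (X Y : Type) (T : X -> X) (S : Y -> Y) : X * Y -> X * Y :=
  fun p => (T p.1, S p.2).

(* Main.v *)
Require Import Defs.
From mathcomp Require Import all_boot all_order all_algebra.
From mathcomp Require Import finmap boolp classical_sets cardinality.
From mathcomp Require Import zify.
Set Implicit Arguments. Unset Strict Implicit. Unset Printing Implicit Defensive.

Local Open Scope classical_set_scope.
Lemma card_fset_seq (T : choiceType) (A : set T) (s : seq T) :
  (forall x, A x <-> x \in s) -> #|` fset_set A| = size (undup s).
Proof.
move=> hA.
have -> : A = [set` [fset x in s]%fset].
  apply/seteqP; split=> x /=; rewrite ?inE; by move/hA.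
by rewrite set_fsetK card_fseq.
Qed.

Lemma finite_seq (T : choiceType) (A : set T) (s : seq T) :
  (forall x, A x <-> x \in s) -> finite_set A.
Proof.
move=> hA.
have -> : A = [set` [fset x in s]%fset].
  apply/seteqP; split=> x /=; rewrite ?inE; by move/hA.
exact: finite_fset.
Qed.

Lemma count_fset_set (T : choiceType) (A : set T) (P : seq T) :
  uniq P -> finite_set A -> (forall x, A x -> x \in P) ->
  count (fun x => x \in A) P = #|` fset_set A|.
Proof.
move=> uP fA sub.
rewrite -size_filter.
have := @card_fset_seq T A [seq x <- P | x \in A].
rewrite undup_id ?filter_uniq // => <- // x; rewrite mem_filter.
case: (boolP (x \in A)) => h /=.
  by rewrite in_setE in h; split=> // _; apply: sub.
by move/negP: h; rewrite in_setE; split.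
Qed.
Local Close Scope classical_set_scope.
Section Iter.
Variables (X : eqType) (T : X -> X).

Definition orb y d := [seq iter k T y | k <- iota 0 d].
Definition exper y d := [&& 0 < d, iter d T y == y & uniq (orb y d)].

Lemma iter_mulper y d q : iter d T y = y -> iter (q * d) T y = y.
Proof.
move=> h; elim: q => [|q IH].
  rewrite mul0n. done.
by rewrite mulSn iterD IH.
Qed.

Lemma iter_mod y d m : iter d T y = y -> iter m T y = iter (m %% d) T y.
Proof. by move=> h; rewrite {1}(divn_eq m d) addnC iterD iter_mulper. Qed.



Lemma orb_inj y d a b : uniq (orb y d) -> a < d -> b < d ->
  iter a T y = iter b T y -> a = b.
Proof.
move=> u ad bd e.
have ha : a < size (orb y d) by rewrite size_map size_iota.
have hb : b < size (orb y d) by rewrite size_map size_iota.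
have := nth_uniq y ha hb u.
by rewrite !(nth_map 0) ?size_iota // !nth_iota // !add0n e eqxx => /esym/eqP.
Qed.

Lemma exper_iter y d j : exper y d ->
  exper (iter j T y) d /\ orb (iter j T y) d =i orb y d.
Proof.
case/and3P => d0 /eqP hd u.
have sub : {subset orb (iter j T y) d <= orb y d}.
  move=> z /mapP[k _ ->]; rewrite -iterD (iter_mod _ hd).
  by apply/mapP; exists ((k + j) %% d) => //; rewrite mem_iota add0n ltn_pmod.
have u' : uniq (orb (iter j T y) d).
  rewrite map_inj_in_uniq ?iota_uniq // => a b; rewrite !mem_iota !add0n => ad bd.
  rewrite -!iterD (iter_mod (a + j) hd) (iter_mod (b+j) hd) => e.
  have := orb_inj u (ltn_pmod _ d0) (ltn_pmod _ d0) e => /eqP.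
  by rewrite eqn_modDr !modn_small // => /eqP.
have he : iter d T (iter j T y) = iter j T y by rewrite -iterD addnC iterD hd.
split; first by rewrite /exper d0 he eqxx.
have [] := uniq_min_size u' sub => //.
by rewrite !size_map !size_iota.
Qed.

Lemma exper_uniq y d e : exper y d -> exper y e -> d = e.
Proof.
case/and3P => d0 /eqP hd ud; case/and3P => e0 /eqP he ue.
case: (ltngtP d e) => // lt.
  by have := orb_inj ue (lt) e0 hd; case: d d0 {hd ud lt}.
by have := orb_inj ud (lt) d0 he; case: e e0 {he ue lt}.
Qed.

Lemma exper_exists y n : 0 < n -> iter n T y = y -> exists2 d, exper y d & d %| n.
Proof.
move=> n0 hn.
have ex : exists k, (0 < k) && (iter k T y == y) by exists n; rewrite n0 hn eqxx.
case: (ex_minnP ex) => d /andP[d0 /eqP hd] min.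
have minp k : 0 < k -> iter k T y = y -> d <= k.
  by move=> k0 hk; apply: min; rewrite k0 hk eqxx.
have dn : d %| n.
  rewrite /dvdn; apply/eqP.
  have hm := (iter_mod n hd); rewrite hn in hm.
  case: (posnP (n %% d)) => // m0.
  have := minp _ m0 (esym hm); by rewrite leqNgt ltn_pmod.
exists d => //; rewrite /exper d0 hd eqxx /=.
rewrite map_inj_in_uniq ?iota_uniq // => a b; rewrite !mem_iota !add0n => ad bd e.
wlog ab : a b ad bd e / a <= b.
  move=> W; case: (leqP a b) => h; first exact: W.
  by apply/esym/W => //; apply: ltnW.
case: (ltngtP a b) ab => // ab _.
have H : iter (d - b + a) T y = y.
  by rewrite iterD e -iterD subnK //; move: bd; lia.
have := minp (d - b + a) ltac:(move: bd ab; lia) H.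
move: bd ad ab; lia.
Qed.
End Iter.

Section Count.
Variables (X : choiceType) (T : X -> X).

Definition Oset (y : X) d : set X :=
  [set iter k T y | k in [set k : nat | (k < d)%N]]%classic.

Lemma Oset_mem y d z : Oset y d z <-> z \in orb T y d.
Proof.
split=> [[k /= kd <-]|/mapP[k]]; first by apply/mapP; exists k; rewrite ?mem_iota.
by rewrite mem_iota add0n => kd ->; exists k.
Qed.

Lemma closed_orbitP d A : 0 < d ->
  closed_orbit T d A <-> exists y, exper T y d /\ A = Oset y d.
Proof.
move=> d0; split.
  case=> y [hy [hA [fA cA]]]; exists y; split => //.
  rewrite /exper d0 hy eqxx /=.
  have := @card_fset_seq X A (orb T y d).
  rewrite cA => /(_ _) h.
  have {}h : d = size (undup (orb T y d)) by apply: h => x; rewrite hA; exact: Oset_mem.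
  apply/negPn; rewrite -ltn_size_undup -h size_map size_iota ltnn //.
case=> y [/and3P[_ /eqP hy u] ->]; exists y; split => //; split => //.
split; first exact: (finite_seq (Oset_mem y d)).
by rewrite (card_fset_seq (Oset_mem y d)) undup_id // size_map size_iota.
Qed.


Hypothesis hT : fin_periodic T.

Lemma finite_closed d : 0 < d -> finite_set (closed_orbit T d).
Proof.
move=> d0; apply: (sub_finite_set _ (finite_image (fun y => Oset y d) (hT d0))).
move=> A /(closed_orbitP _ d0) [y [ey ->]]; exists y => //.
by case/and3P: ey => _ /eqP.
Qed.

Lemma in_Orb d A : 0 < d ->
  (A \in fset_set (closed_orbit T d)) = `[< closed_orbit T d A >].
Proof.
move=> d0; rewrite in_fset_set //; exact: finite_closed.
Qed.

Lemma fix_formula n : 0 < n -> FixCount T n = \sum_(d <- divisors n) d * OrbCount T d.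
Proof.
move=> n0.
set Ps := fset_set (per_pts T n).
have inPs x : (x \in Ps) = `[< iter n T x = x >].
  by rewrite in_fset_set //; exact: hT.
rewrite /FixCount -/Ps.
have -> : #|` Ps| = \sum_(x <- Ps) 1 by rewrite sum1_size.
rewrite (eq_big_seq (fun x => \sum_(d <- divisors n)
   \sum_(A <- fset_set (closed_orbit T d)) ((x \in A) : nat))); last first.
  move=> x; rewrite inPs => /asboolP hx.
  have [d0 e0 d0n] := exper_exists n0 hx.
  have d0p : 0 < d0 by case/and3P: e0.
  rewrite (bigD1_seq (r:=divisors n) d0) /= ?divisors_uniq -?dvdn_divisors //.
  rewrite [X in _ + X]big1_seq ?addn0; last first.
    move=> d /andP[dd0 dn].
    have dp : 0 < d by move: dn; rewrite -dvdn_divisors // => /dvdn_gt0; apply.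
    apply: big1_seq => A /andP[_]; rewrite in_Orb // => /asboolP.
    case/(closed_orbitP _ dp) => y [ey ->].
    case: (boolP (x \in Oset y d)) => //; rewrite in_setE => /Oset_mem /mapP[k _ xk].
    have [ex _] := exper_iter k ey; rewrite -xk in ex.
    by rewrite (exper_uniq ex e0) eqxx in dd0.
  set A0 := Oset x d0.
  have A0in : A0 \in fset_set (closed_orbit T d0).
    by rewrite in_Orb //; apply/asboolP/closed_orbitP => //; exists x.
  rewrite (bigD1_seq A0) ?fset_uniq //= big1_seq ?addn0.
    have -> : x \in A0 by rewrite in_setE; exists 0.
    done.
  move=> A /andP[AA0]; rewrite in_Orb // => /asboolP.
  case/(closed_orbitP _ d0p) => y [ey eA]; rewrite eA in AA0 *.
  case: (boolP (x \in Oset y d0)) => //; rewrite in_setE => /Oset_mem /mapP[k _ xk].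
  have [_ eo] := exper_iter k ey; rewrite -xk in eo.
  suff : A0 = Oset y d0 by move=> h; rewrite h eqxx in AA0.
  apply/seteqP; split=> z /Oset_mem h; apply/Oset_mem; by rewrite ?eo // -eo.
rewrite exchange_big /=; apply: eq_big_seq => d; rewrite -dvdn_divisors // => dn.
have dp : 0 < d by apply: dvdn_gt0 dn.
rewrite exchange_big /=.
rewrite (eq_big_seq (fun _ => d)); last first.
  move=> A; rewrite in_Orb // => /asboolP hA.
  have [y [ey eA]] := (closed_orbitP _ dp).1 hA.
  case: hA => _ [_ [_ [fA cA]]].
  have hsub : forall z, A z -> z \in Ps.
    move=> z; rewrite eA => /Oset_mem /mapP[k _ ->].
  have [ez _] := exper_iter k ey; case/and3P: ez => _ /eqP hz _.
  rewrite inPs; apply/asboolP.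
    by rewrite (iter_mod _ hz) (eqP dn).
  rewrite -cA -(count_fset_set (fset_uniq Ps) fA hsub).
  by elim: (enum_fset Ps) => [|a s IH]; rewrite ?big_nil ?big_cons //= IH.
by rewrite big_const_seq count_predT iter_addn_0 mulnC.
Qed.

End Count.

Lemma iter_prod (X Y : Type) (T : X -> X) (S : Y -> Y) n p :
  iter n (prod_map T S) p = (iter n T p.1, iter n S p.2).
Proof. by elim: n => [|n IH] /=; [case: p | rewrite IH]. Qed.

Lemma per_prod_mem (X Y : choiceType) (T : X -> X) (S : Y -> Y) n :
  fin_periodic T -> fin_periodic S -> 0 < n ->
  forall z, per_pts (prod_map T S) n z <->
   z \in [seq (a, b) | a <- enum_fset (fset_set (per_pts T n)),
                       b <- enum_fset (fset_set (per_pts S n))].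
Proof.
move=> hT hS n0.
set PT := fset_set (per_pts T n); set PS := fset_set (per_pts S n).
have inPT x : (x \in PT) = `[< iter n T x = x >].
  by rewrite in_fset_set //; exact: hT.
have inPS x : (x \in PS) = `[< iter n S x = x >].
  by rewrite in_fset_set //; exact: hS.
move=> [a b]; split.
  rewrite /per_pts /= iter_prod => -[ea eb].
  apply/allpairsP; exists (a, b) => /=; split => //.
    by rewrite inPT; apply/asboolP.
  by rewrite inPS; apply/asboolP.
case/allpairsP => -[c d] /= [hc hd [-> ->]].
rewrite /per_pts /= iter_prod.
move: hc hd; rewrite inPT inPS => /asboolP -> /asboolP -> //.
Qed.

Lemma fin_prod (X Y : choiceType) (T : X -> X) (S : Y -> Y) :
  fin_periodic T -> fin_periodic S -> fin_periodic (prod_map T S).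
Proof. move=> hT hS n n0; exact: (finite_seq (per_prod_mem hT hS n0)). Qed.

Lemma fix_prod (X Y : choiceType) (T : X -> X) (S : Y -> Y) n :
  fin_periodic T -> fin_periodic S -> 0 < n ->
  FixCount (prod_map T S) n = FixCount T n * FixCount S n.
Proof.
move=> hT hS n0; rewrite /FixCount (card_fset_seq (per_prod_mem hT hS n0)).
rewrite undup_id ?size_allpairs //.
apply: allpairs_uniq; rewrite ?fset_uniq //.
by move=> [a b] [c d] _ _ /= [-> ->].
Qed.
Lemma dvd_split d m n : coprime m n -> d %| m * n ->
  d = gcdn d m * gcdn d n.
Proof.
move=> co dmn.
set a := gcdn d m; set b := gcdn d n.
have cab : coprime a b.
  apply: (coprime_dvdl (dvdn_gcdr d m)); apply: (coprime_dvdr (dvdn_gcdr d n)) co.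
apply/eqP; rewrite eqn_dvd; apply/andP; split.
  have h1 : d %| a * n by rewrite /a muln_gcdl dvdn_gcd dvdn_mulr.
  have h2 : d %| a * d by apply: dvdn_mull.
  by rewrite /b muln_gcdr dvdn_gcd h2.
by rewrite Gauss_dvd // dvdn_gcdl dvdn_gcdl.
Qed.

Lemma sum_divisors_mul (R : nmodType) (h : nat -> R) m n : 0 < m -> 0 < n -> coprime m n ->
  (\sum_(d <- divisors (m * n)) h d =
   \sum_(a <- divisors m) \sum_(b <- divisors n) h (a * b))%R.
Proof.
move=> m0 n0 co.
rewrite -(big_allpairs_dep (h := muln)).
apply: perm_big; apply: uniq_perm; rewrite ?divisors_uniq //.
  apply: allpairs_uniq; rewrite ?divisors_uniq //.
  move=> [a b] [c d] /allpairsP[[a' b'] /= [ha hb [-> ->]]].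
  move=> /allpairsP[[c' d'] /= [hc hd [-> ->]]] /= e.
  move: ha hb hc hd; rewrite -!dvdn_divisors // => ha hb hc hd.
  have cbm : coprime m b' by apply: coprime_dvdr hb co.
  have cdm : coprime m d' by apply: coprime_dvdr hd co.
  have ea : a' = c'.
    have := Gauss_gcdl a' cbm; rewrite e (Gauss_gcdl c' cdm).
    by rewrite (gcdn_idPr ha) (gcdn_idPr hc).
  subst c'; congr pair; apply/eqP; rewrite -(eqn_pmul2l (_ : 0 < a')) ?e //.
  by apply: dvdn_gt0 ha.
move=> d; apply/idP/allpairsP.
  rewrite -dvdn_divisors ?muln_gt0 ?m0 // => dmn.
  exists (gcdn d m, gcdn d n) => /=; split; rewrite -?dvdn_divisors ?dvdn_gcdr //.
  exact: dvd_split.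
case=> [[a b] /= [ha hb ->]].
move: ha hb; rewrite -!dvdn_divisors ?muln_gt0 ?m0 // => ha hb.
exact: dvdn_mul.
Qed.

Section Arith.
Import GRing.Theory.
Local Open Scope ring_scope.
Lemma lt_prod a b m n : (0 < a)%N -> (0 < b)%N -> (a <= m)%N -> (b <= n)%N ->
  (a != m) || (b != n) -> (a * b < m * n)%N.
Proof. move=> a0 b0 am bn /orP[] /eqP h; nia. Qed.

Lemma conv_mult (g F : nat -> int) :
  (forall n, (0 < n)%N -> F n = \sum_(d <- divisors n) g d) ->
  Defs.multiplicative g <-> Defs.multiplicative F.
Proof.
move=> hF.
have d1 : divisors 1 = [:: 1%N] by [].
split=> [[g1 gM]|[F1 FM]].
  split; first by rewrite hF // d1 big_seq1.
  move=> m n m0 n0 co; rewrite hF ?muln_gt0 ?m0 // sum_divisors_mul //.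
  rewrite hF // hF // big_distrlr /=.
  apply: eq_big_seq => a; rewrite -dvdn_divisors // => am.
  apply: eq_big_seq => b; rewrite -dvdn_divisors // => bn.
  apply: gM; [exact: dvdn_gt0 am | exact: dvdn_gt0 bn |].
  exact: (coprime_dvdl am (coprime_dvdr bn co)).
have g1 : g 1%N = 1 by rewrite -F1 hF // d1 big_seq1.
split => //.
suff H : forall k m n, (m * n < k)%N -> (0 < m)%N -> (0 < n)%N -> coprime m n ->
  g (m * n)%N = g m * g n.
  by move=> m n m0 n0 co; apply: (H (m * n).+1).
elim=> // k IH m n lt m0 n0 co.
have E : F (m * n)%N - F m * F n =
    \sum_(a <- divisors m) \sum_(b <- divisors n) (g (a * b)%N - g a * g b).
  rewrite hF ?muln_gt0 ?m0 // sum_divisors_mul // hF // hF // big_distrlr /=.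
  rewrite -sumrB; apply: eq_bigr => a _; by rewrite sumrB.
rewrite FM // subrr in E.
move/eqP: E; rewrite eq_sym (bigD1_seq (r := divisors m) m) ?divisors_uniq ?divisors_id //=.
rewrite (bigD1_seq (r := divisors n) n) ?divisors_uniq ?divisors_id //=.
rewrite big1_seq ?addr0; last first.
  move=> b /andP[bn]; rewrite -dvdn_divisors // => bd.
  have b0 : (0 < b)%N by apply: dvdn_gt0 bd.
  apply/eqP; rewrite subr_eq0; apply/eqP/IH => //.
  - have := lt_prod m0 b0 (leqnn m) (dvdn_leq n0 bd); rewrite bn orbT => /(_ isT).
    by move=> h; apply: leq_trans h _.
  - exact: coprime_dvdr bd co.
rewrite big1_seq ?addr0; last first.
  move=> a /andP[am]; rewrite -dvdn_divisors // => ad.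
  have a0 : (0 < a)%N by apply: dvdn_gt0 ad.
  apply: big1_seq => b; rewrite -dvdn_divisors // => bd.
  have b0 : (0 < b)%N by apply: dvdn_gt0 bd.
  apply/eqP; rewrite subr_eq0; apply/eqP/IH => //.
  - have := lt_prod a0 b0 (dvdn_leq m0 ad) (dvdn_leq n0 bd); rewrite am /= => /(_ isT).
    by move=> h; apply: leq_trans h _.
  - exact: (coprime_dvdl ad (coprime_dvdr bd co)).
by rewrite subr_eq0 => /eqP.
Qed.

Lemma mult_ext (f h : nat -> int) : (forall n, (0 < n)%N -> f n = h n) ->
  Defs.multiplicative f -> Defs.multiplicative h.
Proof.
move=> e [f1 fM]; split; first by rewrite -e.
move=> m n m0 n0 co; rewrite -!e ?muln_gt0 ?m0 //; exact: fM.
Qed.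

Lemma mult_mul (f h : nat -> int) :
  Defs.multiplicative f -> Defs.multiplicative h ->
  Defs.multiplicative (fun n => f n * h n).
Proof.
move=> [f1 fM] [h1 hM]; split; first by rewrite f1 h1 mulr1.
by move=> m n m0 n0 co; rewrite fM // hM // mulrACA.
Qed.

Lemma mult_div (f h : nat -> int) :
  Defs.multiplicative f -> (forall k, (0 < k)%N -> f k != 0) ->
  Defs.multiplicative (fun n => f n * h n) -> Defs.multiplicative h.
Proof.
move=> [f1 fM] nz [fh1 fhM]; split; first by rewrite f1 mul1r in fh1.
move=> m n m0 n0 co.
have mn0 : (0 < m * n)%N by rewrite muln_gt0 m0.
apply: (mulfI (nz _ mn0)); rewrite fhM // fM //.
by rewrite mulrACA.
Qed.
End Arith.

Section Maps.
Import GRing.Theory.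
Local Open Scope ring_scope.
Variables (X : choiceType) (T : X -> X).
Hypothesis hT : fin_periodic T.

Lemma F_rel n : (0 < n)%N -> (FixCount T n)%:Z =
  \sum_(d <- divisors n) (d%:Z * (OrbCount T d)%:Z).
Proof.
move=> n0; rewrite fix_formula // (big_morph Posz PoszD (erefl 0%:Z)).
by apply: eq_bigr => d _; rewrite PoszM.
Qed.

Lemma O_iff : Defs.multiplicative (fun n => (OrbCount T n)%:Z) <->
              Defs.multiplicative (fun n => (FixCount T n)%:Z).
Proof.
apply: (iff_trans _ (conv_mult F_rel)).
split=> [[o1 oM]|[g1 gM]].
  split; first by rewrite o1.
  by move=> m n m0 n0 co; rewrite oM // PoszM mulrACA.
split; first by rewrite mul1r in g1.
move=> m n m0 n0 co.
have nz : ((m * n)%N%:Z != 0) by rewrite eqz_nat muln_eq0 negb_or -!lt0n m0.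
apply: (mulfI nz); rewrite gM //= PoszM.
by rewrite mulrACA.
Qed.

Lemma f_nz : Defs.multiplicative (fun n => (OrbCount T n)%:Z) ->
  forall k, (0 < k)%N -> (FixCount T k)%:Z != 0.
Proof.
move=> [o1 _] k k0; rewrite eqz_nat -lt0n fix_formula //.
rewrite (bigD1_seq (r := divisors k) 1%N) ?divisors_uniq ?divisor1 //=.
have -> : OrbCount T 1 = 1%N by case: o1.
by rewrite mul1n.
Qed.
End Maps.

Theorem lemma3p1 (X Y : choiceType) (T : X -> X) (S : Y -> Y)
  (hT : fin_periodic T) (hS : fin_periodic S) :
  let oT := fun n => ((OrbCount T n)%:Z)%R in
  let oS := fun n => ((OrbCount S n)%:Z)%R in
  let oTS := fun n => ((OrbCount (prod_map T S) n)%:Z)%R in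
  (multiplicative oT -> multiplicative oS -> multiplicative oTS) /\
  (multiplicative oT -> multiplicative oTS -> multiplicative oS) /\
  (multiplicative oS -> multiplicative oTS -> multiplicative oT).
Proof.
move=> oT oS oTS.
have hTS := fin_prod hT hS.
have eTS : forall n, (0 < n)%N -> ((FixCount (prod_map T S) n)%:Z =
   (FixCount T n)%:Z * (FixCount S n)%:Z)%R.
  by move=> n n0; rewrite fix_prod // PoszM.
have eST : forall n, (0 < n)%N -> ((FixCount (prod_map T S) n)%:Z =
   (FixCount S n)%:Z * (FixCount T n)%:Z)%R.
  by move=> n n0; rewrite fix_prod // PoszM GRing.mulrC.
split; [|split].
- move=> /(O_iff hT) mT /(O_iff hS) mS; apply/(O_iff hTS).
  apply: mult_ext (mult_mul mT mS) => n n0; by rewrite eTS.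
- move=> mT0 /(O_iff hTS) mTS; apply/(O_iff hS).
  apply: (mult_div ((O_iff hT).1 mT0) (f_nz hT mT0)).
  by apply: mult_ext mTS => n n0; rewrite eTS.
- move=> mS0 /(O_iff hTS) mTS; apply/(O_iff hT).
  apply: (mult_div ((O_iff hS).1 mS0) (f_nz hS mS0)).
  by apply: mult_ext mTS => n n0; rewrite eST.
Qed.
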